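(* Let $q\in\mathbb C$ with $|q|=1$, $q^2\neq1$, let $A,B$ be self-adjoint operators on a Hilbert space $\mathcal H$, and let $\lambda,\lambda q\in\rho(A)$, $\mu,\mu q\in\rho(B)$. Then (a) the operator inclusion $qR_{\lambda q}(A)B\subseteq BR_\lambda(A)$ holds if and only if $$R_\lambda(A)R_\mu(B)=qR_{\mu q}(B)R_{\lambda q}(A)+\mu\lambda q(q-1)R_{\mu q}(B)R_{\lambda q}(A)R_\lambda(A)R_\mu(B)$$ holds as an identity of bounded operators on $\mathcal H$; (b) the operator inclusion $R_\mu(B)A\subseteq qAR_{\mu q}(B)$ holds if and only if $$R_\lambda(A)R_\mu(B)=qR_{\mu q}(B)R_{\lambda q}(A)+\mu\lambda q(q-1)R_\lambda(A)R_\mu(B)R_{\mu q}(B)R_{\lambda q}(A)$$ holds on $\mathcal H$.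
   Context: $\rho(T)$ denotes the resolvent set and $R_\lambda(T)=(T-\lambda I)^{-1}$ the resolvent of a closed operator $T$. For operators $S,T$, $S\subseteq T$ means $T$ is an extension of $S$; products of unbounded operators have their natural domains. *)

(* Defs.v *)
From Stdlib Require Import Reals.
Open Scope R_scope.

Record Cpx := mkC { re : R; im : R }.
Definition Czero : Cpx := mkC 0 0.
Definition Cone : Cpx := mkC 1 0.
Definition Cadd (a b : Cpx) : Cpx := mkC (re a + re b) (im a + im b).
Definition Copp (a : Cpx) : Cpx := mkC (- re a) (- im a).
Definition Csub (a b : Cpx) : Cpx := Cadd a (Copp b).
Definition Cmul (a b : Cpx) : Cpx :=
  mkC (re a * re b - im a * im b) (re a * im b + im a * re b).
Definition Cconj (a : Cpx) : Cpx := mkC (re a) (- im a).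
Definition Cnorm (a : Cpx) : R := sqrt (re a * re a + im a * im a).

Record HilbertSpace := {
  hcar :> Type;
  vzero : hcar;
  vadd : hcar -> hcar -> hcar;
  vopp : hcar -> hcar;
  vscal : Cpx -> hcar -> hcar;
  inner : hcar -> hcar -> Cpx;   (* linear in the first argument *)
  vaddA : forall x y z, vadd x (vadd y z) = vadd (vadd x y) z;
  vaddC : forall x y, vadd x y = vadd y x;
  vadd0 : forall x, vadd x vzero = x;
  vaddN : forall x, vadd x (vopp x) = vzero;
  vscal1 : forall x, vscal Cone x = x;
  vscalA : forall a b x, vscal a (vscal b x) = vscal (Cmul a b) x;
  vscalDl : forall a b x, vscal (Cadd a b) x = vadd (vscal a x) (vscal b x);
  vscalDr : forall a x y, vscal a (vadd x y) = vadd (vscal a x) (vscal a y);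
  inner_addl : forall x y z, inner (vadd x y) z = Cadd (inner x z) (inner y z);
  inner_scall : forall a x y, inner (vscal a x) y = Cmul a (inner x y);
  inner_sym : forall x y, inner y x = Cconj (inner x y);
  inner_pos : forall x, 0 <= re (inner x x);
  inner_def : forall x, inner x x = Czero -> x = vzero;
  hcomplete : forall u : nat -> hcar,
    (forall eps, 0 < eps -> exists N, forall m n, (N <= m)%nat -> (N <= n)%nat ->
        sqrt (re (inner (vadd (u m) (vopp (u n))) (vadd (u m) (vopp (u n))))) < eps) ->
    exists l, forall eps, 0 < eps -> exists N, forall n, (N <= n)%nat ->
        sqrt (re (inner (vadd (u n) (vopp l)) (vadd (u n) (vopp l)))) < eps
}.

Arguments vzero {h}. Arguments vadd {h}. Arguments vopp {h}.
Arguments vscal {h}. Arguments inner {h}.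

Section Ops.
Variable H : HilbertSpace.

Definition vsub (x y : H) : H := vadd x (vopp y).
Definition hnorm (x : H) : R := sqrt (re (inner x x)).

(* Partial operator: a domain and an action (meaningful on the domain). *)
Record pop := { dom : H -> Prop; app : H -> H }.

Definition total (f : H -> H) : pop := {| dom := fun _ => True; app := f |}.

Definition op_incl (S T : pop) : Prop :=
  (forall x, dom S x -> dom T x) /\ (forall x, dom S x -> app S x = app T x).

Definition op_comp (S T : pop) : pop :=
  {| dom := fun x => dom T x /\ dom S (app T x); app := fun x => app S (app T x) |}.

Definition op_scal (c : Cpx) (T : pop) : pop :=
  {| dom := dom T; app := fun x => vscal c (app T x) |}.

Definition linear_op (T : pop) : Prop :=
  dom T vzero /\
  (forall x y, dom T x -> dom T y -> dom T (vadd x y) /\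
      app T (vadd x y) = vadd (app T x) (app T y)) /\
  (forall c x, dom T x -> dom T (vscal c x) /\ app T (vscal c x) = vscal c (app T x)).

Definition dense (D : H -> Prop) : Prop :=
  forall x eps, 0 < eps -> exists y, D y /\ hnorm (vsub x y) < eps.

(* (y, z) belongs to the graph of the adjoint T* *)
Definition adjoint_graph (T : pop) (y z : H) : Prop :=
  forall x, dom T x -> inner (app T x) y = inner x z.

Definition self_adjoint (T : pop) : Prop :=
  linear_op T /\ dense (dom T) /\
  (forall x, dom T x -> adjoint_graph T x (app T x)) /\
  (forall y z, adjoint_graph T y z -> dom T y /\ app T y = z).

Definition bounded_map (f : H -> H) : Prop :=
  exists M, forall x, hnorm (f x) <= M * hnorm x.

(* R is the resolvent (T - lam I)^{-1}: a bounded everywhere-defined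
   two-sided inverse of T - lam I : D(T) -> H.  Existence of such R is
   exactly lam ∈ ρ(T). *)
Definition is_resolvent (T : pop) (lam : Cpx) (Rf : H -> H) : Prop :=
  bounded_map Rf /\
  (forall y, dom T (Rf y) /\ vsub (app T (Rf y)) (vscal lam (Rf y)) = y) /\
  (forall x, dom T x -> Rf (vsub (app T x) (vscal lam x)) = x).

Definition resolvent_set (T : pop) (lam : Cpx) : Prop :=
  exists Rf, is_resolvent T lam Rf.

End Ops.

Arguments total {H}. Arguments op_incl {H}. Arguments op_comp {H}.
Arguments op_scal {H}. Arguments self_adjoint {H}. Arguments is_resolvent {H}.
Arguments dom {H}. Arguments app {H}.

(* Main.v *)
Require Import Defs.
From Stdlib Require Import Reals Lra.
Open Scope R_scope.
Arguments vsub {H}.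

Lemma Cext : forall a b : Cpx, re a = re b -> im a = im b -> a = b.
Proof. intros [a1 a2] [b1 b2]; simpl; intros; subst; reflexivity. Qed.

Section Gen.
Variable H : HilbertSpace.

Lemma inner_zero (z : H) : inner vzero z = Czero.
Proof.
  assert (E: inner (vadd vzero vzero) z = Cadd (inner vzero z) (inner vzero z)) by apply inner_addl.
  rewrite vadd0 in E.
  pose proof (f_equal re E) as E1; pose proof (f_equal im E) as E2.
  unfold Cadd in E1, E2; simpl in E1, E2.
  apply Cext; unfold Czero; simpl; lra.
Qed.

Lemma inner_opp (x z : H) : inner (vopp x) z = Copp (inner x z).
Proof.
  assert (E: inner (vadd x (vopp x)) z = Cadd (inner x z) (inner (vopp x) z)) by apply inner_addl.
  rewrite vaddN, inner_zero in E.
  pose proof (f_equal re E) as E1; pose proof (f_equal im E) as E2.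
  unfold Cadd, Czero in E1, E2; simpl in E1, E2.
  apply Cext; unfold Copp; simpl; lra.
Qed.

Lemma veq_inner (x y : H) : (forall z, inner x z = inner y z) -> x = y.
Proof.
  intros Hz.
  assert (W : vadd x (vopp y) = vzero).
  { apply inner_def. rewrite inner_addl, inner_opp, Hz.
    apply Cext; unfold Cadd, Copp, Czero; simpl; ring. }
  rewrite <- (vadd0 _ x). rewrite <- (vaddN _ y). rewrite (vaddC _ y).
  rewrite vaddA, W, vaddC, vadd0. reflexivity.
Qed.
End Gen.

Ltac vsolve :=
  apply veq_inner; intro; unfold vsub;
  repeat first [ rewrite inner_addl | rewrite inner_scall | rewrite inner_opp
               | rewrite inner_zero ];
  apply Cext; unfold Cadd, Cmul, Copp, Csub, Czero, Cone; simpl; ring.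

Section Gen2.
Variable H : HilbertSpace.

Lemma add_eq (x a b : H) : x = vadd a b -> a = vsub x b.
Proof. intros E; rewrite E; vsolve. Qed.

Lemma sub_eq (a b y : H) : vsub a b = y -> a = vadd y b.
Proof. intros E; rewrite <- E; vsolve. Qed.

Lemma vopp_scal (y : H) : vopp y = vscal (Copp Cone) y.
Proof. vsolve. Qed.

Variable T : pop H.
Variable l : Cpx.
Variable Rf : H -> H.
Hypothesis HT : linear_op H T.
Hypothesis HR : is_resolvent T l Rf.

Lemma R_app y : dom T (Rf y) /\ app T (Rf y) = vadd y (vscal l (Rf y)).
Proof.
  destruct HR as [_ [H1 _]]. destruct (H1 y) as [D E]. split; auto.
  apply sub_eq; exact E.
Qed.

Lemma R_char y z : dom T z -> app T z = vadd y (vscal l z) -> Rf y = z.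
Proof.
  intros D E. destruct HR as [_ [_ H3]].
  assert (y = vsub (app T z) (vscal l z)) as Ey by (rewrite E; vsolve).
  rewrite Ey; apply H3; auto.
Qed.

Lemma R_add x y : Rf (vadd x y) = vadd (Rf x) (Rf y).
Proof.
  destruct HT as [_ [Hadd _]].
  destruct (R_app x) as [Dx Ex]; destruct (R_app y) as [Dy Ey].
  destruct (Hadd _ _ Dx Dy) as [D E].
  apply R_char; auto. rewrite E, Ex, Ey; vsolve.
Qed.

Lemma R_scal c x : Rf (vscal c x) = vscal c (Rf x).
Proof.
  destruct HT as [_ [_ Hsc]].
  destruct (R_app x) as [Dx Ex].
  destruct (Hsc c _ Dx) as [D E].
  apply R_char; auto. rewrite E, Ex; vsolve.
Qed.

Lemma R_sub x y : Rf (vsub x y) = vsub (Rf x) (Rf y).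
Proof.
  unfold vsub. rewrite !vopp_scal, R_add, R_scal. reflexivity.
Qed.

Lemma R_inv x : dom T x -> Rf (vsub (app T x) (vscal l x)) = x.
Proof. destruct HR as [_ [_ H3]]; auto. Qed.
End Gen2.

Lemma res_id (H : HilbertSpace) (T : pop H) l l' R R' :
  linear_op H T -> is_resolvent T l R -> is_resolvent T l' R' ->
  forall y, R y = vadd (R' y) (vscal (Csub l l') (R' (R y))).
Proof.
  intros HT HR HR' y.
  destruct (R_app H T l R HR y) as [D E].
  assert (K : R' (vadd y (vscal (Csub l l') (R y))) = R y).
  { apply (R_char H T l' R' HR'); auto. rewrite E; vsolve. }
  transitivity (R' (vadd y (vscal (Csub l l') (R y)))).
  - symmetry; exact K.
  - rewrite (R_add H T l' R' HT HR'), (R_scal H T l' R' HT HR'). reflexivity.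
Qed.

Lemma q_inv q : Cnorm q = 1 -> exists qi, Cmul qi q = Cone.
Proof.
  destruct q as [a b]. unfold Cnorm; simpl. intro Hn.
  assert (a*a+b*b <> 0) as Hz.
  { intro E; rewrite E, sqrt_0 in Hn; lra. }
  exists (mkC (a/(a*a+b*b)) (-b/(a*a+b*b))).
  apply Cext; unfold Cmul, Cone; simpl; field; auto.
Qed.

Theorem mainTheorem4 (H : HilbertSpace) (q lam mu : Cpx) (A B : pop H)
  (RA RAq RB RBq : H -> H) :
  Cnorm q = 1 -> Cmul q q <> Cone ->
  self_adjoint A -> self_adjoint B ->
  is_resolvent A lam RA -> is_resolvent A (Cmul lam q) RAq ->
  is_resolvent B mu RB -> is_resolvent B (Cmul mu q) RBq ->
  (op_incl (op_scal q (op_comp (total RAq) B)) (op_comp B (total RA)) <->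
   (forall x : H, RA (RB x) =
      vadd (vscal q (RBq (RAq x)))
           (vscal (Cmul (Cmul (Cmul mu lam) q) (Csub q Cone))
                  (RBq (RAq (RA (RB x)))))))
  /\
  (op_incl (op_comp (total RB) A) (op_scal q (op_comp A (total RBq))) <->
   (forall x : H, RA (RB x) =
      vadd (vscal q (RBq (RAq x)))
           (vscal (Cmul (Cmul (Cmul mu lam) q) (Csub q Cone))
                  (RA (RB (RBq (RAq x))))))).
Proof.
  intros Hq Hq2 [LA _] [LB _] HRA HRAq HRB HRBq.
  pose proof (R_add H A lam RA LA HRA) as RAadd.
  pose proof (R_scal H A lam RA LA HRA) as RAscal.
  pose proof (R_sub H A lam RA LA HRA) as RAsub.
  pose proof (R_add H A _ RAq LA HRAq) as RAqadd.
  pose proof (R_scal H A _ RAq LA HRAq) as RAqscal.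
  pose proof (R_sub H A _ RAq LA HRAq) as RAqsub.
  pose proof (R_add H B mu RB LB HRB) as RBadd.
  pose proof (R_scal H B mu RB LB HRB) as RBscal.
  pose proof (R_sub H B mu RB LB HRB) as RBsub.
  pose proof (R_add H B _ RBq LB HRBq) as RBqadd.
  pose proof (R_scal H B _ RBq LB HRBq) as RBqscal.
  pose proof (R_sub H B _ RBq LB HRBq) as RBqsub.
  split; split.
  -
    intros [Hdom Happ] y. cbn in Hdom, Happ.
    destruct (R_app H B mu RB HRB y) as [Dw Ew].
    destruct (Hdom (RB y) (conj Dw I)) as [_ Dv].
    pose proof (Happ (RB y) (conj Dw I)) as Ev.
    pose proof (add_eq H _ _ _ (res_id H A _ _ RA RAq LA HRA HRAq (RB y))) as Hw.
    assert (K : RBq (vadd (vscal q (RAq y))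
        (vscal (Cmul (Cmul (Cmul mu lam) q) (Csub q Cone)) (RAq (RA (RB y))))) = RA (RB y)).
    { apply (R_char H B _ RBq HRBq); auto.
      rewrite <- Ev, Ew, RAqadd, RAqscal, Hw. vsolve. }
    transitivity (RBq (vadd (vscal q (RAq y))
        (vscal (Cmul (Cmul (Cmul mu lam) q) (Csub q Cone)) (RAq (RA (RB y)))))).
    + symmetry; exact K.
    + rewrite RBqadd, !RBqscal. reflexivity.
  -
    intros Id.
    assert (Hel : forall x, dom B x -> dom B (RA x) /\
              app B (RA x) = vscal q (RAq (app B x))).
    { intros x Dx.
      remember (vsub (app B x) (vscal mu x)) as y eqn:Hy.
      assert (RBy : RB y = x) by (rewrite Hy; apply (R_inv H B mu RB HRB); auto).
      pose proof (Id y) as Iy. rewrite RBy in Iy.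
      assert (Hx : RA x = RBq (vadd (vscal q (RAq y))
        (vscal (Cmul (Cmul (Cmul mu lam) q) (Csub q Cone)) (RAq (RA x))))).
      { rewrite RBqadd, !RBqscal. exact Iy. }
      destruct (R_app H B _ RBq HRBq (vadd (vscal q (RAq y))
        (vscal (Cmul (Cmul (Cmul mu lam) q) (Csub q Cone)) (RAq (RA x))))) as [Du Eu].
      rewrite <- Hx in Du, Eu. split; auto.
      pose proof (add_eq H _ _ _ (res_id H A _ _ RA RAq LA HRA HRAq x)) as Hx2.
      rewrite Eu, Hy, RAqsub, RAqscal, Hx2. vsolve. }
    split.
    + intros x [Dx _]. cbn. split; [exact I|]. apply Hel; auto.
    + intros x [Dx _]. cbn. symmetry. apply Hel; auto.
  -
    intros [Hdom Happ] y. cbn in Hdom, Happ.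
    destruct (R_app H A _ RAq HRAq y) as [Dx Ex].
    destruct (Hdom (RAq y) (conj Dx I)) as [_ Dv].
    pose proof (Happ (RAq y) (conj Dx I)) as Hv.
    destruct LA as [_ [_ Asc]].
    destruct (Asc q _ Dv) as [Dqv Eqv].
    pose proof (add_eq H _ _ _ (res_id H B _ _ RBq RB LB HRBq HRB (RAq y))) as HBx.
    assert (K : RA (vsub (RB y) (vscal (Cmul (Cmul (Cmul mu lam) q) (Csub q Cone))
                  (RB (RBq (RAq y))))) = vscal q (RBq (RAq y))).
    { apply (R_char H A lam RA HRA); auto.
      rewrite Eqv, <- Hv, Ex, RBadd, RBscal, HBx. vsolve. }
    rewrite RAsub, RAscal in K.
    apply sub_eq in K. exact K.
  -
    intros Id.
    destruct (q_inv q Hq) as [qi Hqi].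
    assert (Hel : forall x, dom A x -> dom A (RBq x) /\
              RB (app A x) = vscal q (app A (RBq x))).
    { intros x Dx.
      remember (vsub (app A x) (vscal (Cmul lam q) x)) as y eqn:Hy.
      assert (RAy : RAq y = x) by (rewrite Hy; apply (R_inv H A _ RAq HRAq); auto).
      assert (HAx : app A x = vadd y (vscal (Cmul lam q) x)) by (rewrite Hy; vsolve).
      pose proof (Id y) as Iy. rewrite RAy in Iy.
      apply add_eq in Iy.
      rewrite <- RAscal, <- RAsub in Iy.
      destruct (R_app H A lam RA HRA (vsub (RB y) (vscal (Cmul (Cmul (Cmul mu lam) q) (Csub q Cone))
                  (RB (RBq x))))) as [Du Eu].
      rewrite <- Iy in Du, Eu.
      destruct LA as [_ [_ Asc]].
      assert (D1 : dom A (RBq x)).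
      { destruct (Asc qi _ Du) as [D _]. rewrite vscalA, Hqi, vscal1 in D. exact D. }
      split; auto.
      destruct (Asc q _ D1) as [_ E2].
      rewrite <- E2, Eu, HAx, RBadd, RBscal.
      pose proof (add_eq H _ _ _ (res_id H B _ _ RBq RB LB HRBq HRB x)) as HBx.
      rewrite HBx. vsolve. }
    split.
    + intros x [Dx _]. cbn. split; [exact I|]. apply Hel; auto.
    + intros x [Dx _]. cbn. apply Hel; auto.
Qed.
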